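(* Let $K$ be a nonempty compact Hausdorff topological space and let $X$ be a real Banach space. Then $X$ has the property $( ** )$ if and only if $C(K,X)$ has the property $( ** )$.
   Context: All Banach spaces are real. For a Banach space $Z$, $B_Z$, $S_Z$ and $Z^*$ denote its closed unit ball, unit sphere and dual. For $z^*\in S_{Z^*}$ and $0<\alpha<1$, the slice is $S(z^*,\alpha)=\{z\in B_Z: z^*(z)>1-\alpha\}$, and $-S(z^*,\alpha)=\{-z: z\in S(z^*,\alpha)\}$. A Banach space $Z$ has the property $( ** )$ if for all $z_1,z_2\in S_Z$ and every $\varepsilon>0$ there exists $z^*\in S_{Z^*}$ such that, writing $S=S(z^*,\varepsilon)$, one has $z_1\in S$ and $\operatorname{dist}(z_2,S)+\operatorname{dist}(z_2,-S)<2+\varepsilon$. $C(K,X)$ is the Banach space of all continuous functions $K\to X$ with the supremum norm. *)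

(* Defs.v *)
From HB Require Import structures.
From mathcomp Require Import all_boot all_order all_algebra.
From mathcomp Require Import all_classical all_reals all_analysis.
Set Implicit Arguments. Unset Strict Implicit. Unset Printing Implicit Defensive.
Import Order.TTheory GRing.Theory Num.Theory.
Import numFieldNormedType.Exports.
Local Open Scope classical_set_scope.
Local Open Scope ring_scope.

(* A real normed space is presented as a linear subspace [S] of an lmodType [V]
   together with its norm [N] (only used on [S]).  This lets us treat both a
   normed module [X] (S = setT, N = norm) and the space C(K,X) of continuous
   functions (S = continuous functions inside K -> X, N = sup norm) uniformly. *)
Section StarStar.
Variables (R : realType) (V : lmodType R) (S : set V) (N : V -> R).

Definition unit_ball : set V := [set z | S z /\ N z <= 1].

Definition unit_sphere : set V := [set z | S z /\ N z = 1].

(* z* belongs to the unit sphere of the dual Z^* : it is a linear functional on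
   the space whose operator norm  sup_{z in B_Z} |z*(z)|  equals 1
   (this also forces boundedness, hence continuity). *)
Definition dual_unit_sphere (f : V -> R) : Prop :=
  (forall (a : R) (x y : V), S x -> S y -> f (a *: x + y) = a * f x + f y) /\
  ereal_sup [set (`|f z|)%:E | z in unit_ball] = 1%:E.

Definition slice (f : V -> R) (alpha : R) : set V :=
  [set z | unit_ball z /\ 1 - alpha < f z].

Definition opp_set (A : set V) : set V := [set - z | z in A].

Definition dist_to (z : V) (A : set V) : R := inf [set N (z - a) | a in A].

Definition star_star : Prop :=
  forall z1 z2 : V, unit_sphere z1 -> unit_sphere z2 ->
  forall eps : R, 0 < eps ->
  exists f : V -> R, dual_unit_sphere f /\
    slice f eps z1 /\
    dist_to z2 (slice f eps) + dist_to z2 (opp_set (slice f eps)) < 2 + eps.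

End StarStar.

Definition has_star_star (R : realType) (X : normedModType R) : Prop :=
  @star_star R X setT (fun x : X => `|x|).

Definition CKX_has_star_star (R : realType) (K : topologicalType)
  (X : normedModType R) : Prop :=
  @star_star R (K -> X)%type [set f : K -> X | continuous f]
    (fun f => sup [set `|f k| | k in [set: K]]).

(* Main.v *)
Require Import Defs.
From mathcomp Require Import all_boot all_order all_algebra.
From mathcomp Require Import all_classical all_reals all_analysis.
From mathcomp Require Import lra.
Import Order.TTheory GRing.Theory Num.Theory.
Import numFieldNormedType.Exports.
Local Open Scope classical_set_scope.
Local Open Scope ring_scope.
Section HahnBanach.
Variables (R : realType) (V : normedModType R) (w : V).

Definition hb_good (A : set (V * R)) :=
  [/\ (forall v r r', A (v, r) -> A (v, r') -> r = r'),
      (forall a v r u s, A (v, r) -> A (u, s) -> A (a *: v + u, a * r + s)),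
      (forall v r, A (v, r) -> r <= `|v|) & A (w, `|w|)].

Lemma hb_fun {A} : hb_good A -> forall {v r r'}, A (v, r) -> A (v, r') -> r = r'.
Proof. by case. Qed.
Lemma hb_lin {A} : hb_good A ->
  forall a {v r u s}, A (v, r) -> A (u, s) -> A (a *: v + u, a * r + s).
Proof. by case. Qed.
Lemma hb_dom {A} : hb_good A -> forall {v r}, A (v, r) -> r <= `|v|.
Proof. by case. Qed.
Lemma hb_w {A} : hb_good A -> A (w, `|w|).
Proof. by case. Qed.

Lemma hb_good0 {A} : hb_good A -> A (0, 0).
Proof.
case=> _ lin _ Aw; have := lin (-1) _ _ _ _ Aw Aw.
by rewrite scaleN1r addNr mulN1r addNr.
Qed.

Lemma hb_goodZ {A} a {v r} : hb_good A -> A (v, r) -> A (a *: v, a * r).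
Proof.
move=> gA Avr; have := hb_lin gA a Avr (hb_good0 gA).
by rewrite addr0 addr0.
Qed.

Lemma hb_ext A x : hb_good A -> (forall r, ~ A (x, r)) ->
  exists A', hb_good A' /\ A `<` A'.
Proof.
move=> gA nx; case: (gA) => fun_ lin dom Aw.
have A00 := hb_good0 gA.
have key d r d' r' : A (d, r) -> A (d', r') -> r - `|d - x| <= `|d' + x| - r'.
  move=> Adr Adr'; have := dom _ _ (lin 1 _ _ _ _ Adr Adr').
  rewrite scale1r mul1r => h.
  have : `|d + d'| <= `|d - x| + `|d' + x|.
    by rewrite (_ : d + d' = (d - x) + (d' + x)) ?ler_normD // addrACA addNr addr0.
  move=> h2; lra.
pose L := [set y | exists d r, A (d, r) /\ y = r - `|d - x|].
have L0 : L !=set0 by exists (0 - `|0 - x|), 0, 0.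
have Lub : has_ubound L.
  by exists (`|0 + x| - 0) => y [d [r [Adr ->]]]; apply: key.
pose c := sup L.
have cle d r : A (d, r) -> c <= `|d + x| - r.
  by move=> Adr; apply: ge_sup => // y [d' [r' [Adr' ->]]]; apply: key.
have gec d r : A (d, r) -> r - `|d - x| <= c.
  by move=> Adr; apply: ub_le_sup => //; exists d, r.
pose A' := [set p | exists d r t, A (d, r) /\ p = (d + t *: x, r + t * c)].
exists A'; split; last first.
  split.
    by case=> v r Avr; exists v, r, 0; rewrite scale0r mul0r !addr0.
  move=> /(_ (x, c)) h; apply: (nx c); apply: h.
  by exists 0, 0, 1; rewrite scale1r mul1r !add0r.
split.
- move=> v r1 r2 [d1 [s1 [t1 [A1 [e1 e1']]]]] [d2 [s2 [t2 [A2 [e2 e2']]]]].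
  have [tt|tn] := eqVneq t1 t2.
    subst t2; have dd : d1 = d2 by apply: (addIr (t1 *: x)); rewrite -e1 -e2.
    subst d2; rewrite e1' e2' (fun_ _ _ _ A1 A2) //.
  exfalso; apply: (nx ((t1 - t2)^-1 * (- s1 + s2))).
  have := hb_goodZ ((t1 - t2)^-1) gA (lin (-1) _ _ _ _ A1 A2).
  rewrite mulN1r scaleN1r.
  suff -> : (t1 - t2)^-1 *: (- d1 + d2) = x by [].
  have E : d1 + t1 *: x = d2 + t2 *: x by rewrite -e1 -e2.
  have -> : - d1 + d2 = (t1 - t2) *: x.
    rewrite scalerBl; apply: (addIr (t2 *: x)).
    by rewrite subrK -addrA -E addrA addNr add0r.
  by rewrite scalerA mulVf ?scale1r // subr_eq0.
- move=> a v r u s [d1 [s1 [t1 [A1 [-> ->]]]]] [d2 [s2 [t2 [A2 [-> ->]]]]].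
  exists (a *: d1 + d2), (a * s1 + s2), (a * t1 + t2); split.
    exact: lin.
  congr (_, _).
    by rewrite scalerDr scalerA addrACA scalerDl.
  by rewrite mulrDr mulrA addrACA mulrDl.
- move=> v r [d [s [t [Ads [-> ->]]]]].
  have [t0|tn0] := eqVneq t 0.
    by rewrite t0 scale0r mul0r !addr0; exact: dom.
  have [tp|tn] := ltrP 0 t.
    have := cle _ _ (hb_goodZ (t^-1) gA Ads).
    have -> : `|t^-1 *: d + x| = t^-1 * `|d + t *: x|.
      rewrite -[X in `|_ + X|](scale1r x) -(mulVf tn0) -scalerA -scalerDr normrZ.
      by rewrite ger0_norm // invr_ge0 ltW.
    move=> h; have := ler_wpM2l (ltW tp) h.
    rewrite mulrBr !mulrA mulfV // !mul1r; lra.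
  have tneg : t < 0 by rewrite lt_neqAle tn0 tn.
  have := gec _ _ (hb_goodZ ((- t)^-1) gA Ads).
  have -> : `|(- t)^-1 *: d - x| = (- t)^-1 * `|d + t *: x|.
    have tn0' : - t != 0 by rewrite oppr_eq0.
    rewrite -[X in `|_ - X|](scale1r x) -(mulVf tn0') -scalerA -scalerBr normrZ.
    rewrite gtr0_norm ?invr_gt0 ?oppr_gt0 //.
    by rewrite scaleNr opprK.
  have tpos : 0 < - t by rewrite oppr_gt0.
  move=> h; have := ler_wpM2l (ltW tpos) h.
  rewrite mulrBr !mulrA mulfV ?oppr_eq0 // !mul1r; lra.
- by exists w, `|w|, 0; rewrite scale0r mul0r !addr0.
Qed.

Lemma hahn_banach_norm : exists f : V -> R,
  [/\ (forall a x y, f (a *: x + y) = a * f x + f y),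
      (forall x, f x <= `|x|) & f w = `|w|].
Proof.
have [w0|wn0] := eqVneq w 0.
  exists (fun=> 0); split => //; first by move=> *; rewrite mulr0 addr0.
  by rewrite w0 normr0.
pose P := [set A | A = set0 \/ hb_good A].
have PgoodP A : P A -> (exists p, A p) -> hb_good A.
  by case=> // -> [p].
have [A [PA Amax]] : exists A, P A /\ forall B, A `<` B -> ~ P B.
  apply: Zorn_bigcup => F FP Ftot.
  have [[p [X FX Xp]]|Fe] := pselect (exists p, (\bigcup_(X in F) X) p); last first.
    by left; apply/seteqP; split => // p Fp; apply: Fe; exists p.
  right.
  have gX Y : F Y -> forall p, Y p -> hb_good Y.
    by move=> FY q Yq; apply: PgoodP; [exact: FP|exists q].
  have both Y Z p1 q1 : F Y -> F Z -> Y p1 -> Z q1 ->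
      exists U, [/\ F U, U p1, U q1 & hb_good U].
    move=> FY FZ Yp Zq; have [YZ|ZY] := Ftot _ _ FY FZ.
      by exists Z; split => //; [exact: YZ | exact: (gX _ FZ q1)].
    by exists Y; split => //; [exact: ZY | exact: (gX _ FY p1)].
  split.
  - move=> v r r' [Y FY Yv] [Z FZ Zv].
    have [U [FU U1 U2 gU]] := both _ _ _ _ FY FZ Yv Zv.
    exact (hb_fun gU U1 U2).
  - move=> a v r u s [Y FY Yv] [Z FZ Zu].
    have [U [FU U1 U2 gU]] := both _ _ _ _ FY FZ Yv Zu.
    by exists U => //; apply: hb_lin.
  - move=> v r [Y FY Yv]; exact (hb_dom (gX _ FY _ Yv) Yv).
  - by exists X => //; exact (hb_w (gX _ FX _ Xp)).
have gA : hb_good A.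
  case: PA => // A0; exfalso.
  pose A0' := [set p | exists t : R, p = (t *: w, t * `|w|)].
  apply: (Amax A0'); last first.
    right; split.
    - move=> v r r' [t [-> ->]] [t' [e ->]].
      have : (t - t') *: w = 0 by rewrite scalerBl e subrr.
      move/eqP; rewrite scaler_eq0 (negbTE wn0) orbF subr_eq0 => /eqP -> //.
    - move=> a v r u s [t [-> ->]] [t' [-> ->]].
      by exists (a * t + t'); rewrite scalerDl scalerA mulrDl mulrA.
    - move=> v r [t [-> ->]]; rewrite normrZ ler_wpM2r //; exact: ler_norm.
    - by exists 1; rewrite scale1r mul1r.
  rewrite A0; split => // /(_ (w, `|w|)) h.
  have h1 : A0' (w, `|w|) by exists 1; rewrite scale1r mul1r.
  by have := h h1.
have total x : exists r, A (x, r).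
  apply: contrapT => nx.
  have [A' [gA' AA']] := @hb_ext A x gA (fun r Axr => nx (ex_intro _ r Axr)).
  by apply: (Amax A' AA'); right.
pose f x := projT1 (cid (total x)).
have fP x : A (x, f x) by rewrite /f; case: cid.
exists f; split.
- move=> a x y; exact (hb_fun gA (fP _) (hb_lin gA a (fP x) (fP y))).
- move=> x; exact (hb_dom gA (fP x)).
- exact (hb_fun gA (fP _) (hb_w gA)).
Qed.

End HahnBanach.

Section General.
Variables (R : realType) (V : lmodType R) (S : set V) (N : V -> R).

Lemma dist_le z (A : set V) a : (forall b, A b -> 0 <= N (z - b)) -> A a ->
  dist_to N z A <= N (z - a).
Proof.
move=> h Aa; apply: ge_inf; last by exists a.
by exists 0 => _ [b Ab <-]; exact: h.
Qed.

Lemma dist_sum_lt z (A B : set V) c : A !=set0 -> B !=set0 ->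
  dist_to N z A + dist_to N z B < c ->
  exists a b, [/\ A a, B b & N (z - a) + N (z - b) < c].
Proof.
move=> [a0 Aa0] [b0 Bb0] hc.
pose g := c - dist_to N z A - dist_to N z B.
have g0 : 0 < g by rewrite /g; lra.
have [_ [a Aa <-] ha] : exists2 y, [set N (z - a) | a in A] y &
    y < dist_to N z A + g / 2.
  by apply: inf_lt; [exists (N (z - a0)), a0 | rewrite /dist_to; lra].
have [_ [b Bb <-] hb] : exists2 y, [set N (z - a) | a in B] y &
    y < dist_to N z B + g / 2.
  by apply: inf_lt; [exists (N (z - b0)), b0 | rewrite /dist_to; lra].
exists a, b; split => //; rewrite /g in ha hb; lra.
Qed.

Lemma dual_le1 f z : dual_unit_sphere S N f -> unit_ball S N z -> `|f z| <= 1.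
Proof.
move=> [_ hsup] hz; rewrite -lee_fin -hsup.
by apply: ereal_sup_ubound; exists z.
Qed.

Lemma dual0 f : dual_unit_sphere S N f -> S 0 -> f 0 = 0.
Proof.
move=> [lin _] S0; have := lin 1 0 0 S0 S0.
rewrite scale1r addr0 mul1r => h; lra.
Qed.

End General.

Lemma exists_small (R : realType) (eps : R) : 0 < eps ->
  exists e : R, [/\ 0 < e, e <= eps / 4 & e <= 1 / 2].
Proof.
move=> he; have [le2|gt2] := lerP eps 2.
  by exists (eps / 4); split => //; lra.
by exists (1 / 2); split => //; lra.
Qed.

Section CK.
Variables (R : realType) (K : topologicalType) (X : normedModType R).
Hypothesis hK : compact [set: K].
Variable k0 : K.

Definition supn (F : K -> X) : R := sup [set `|F k| | k in [set: K]].

Lemma supn_ub (F : K -> X) : continuous F -> has_ubound [set `|F k| | k in [set: K]].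
Proof.
move=> cF.
have cN : continuous (fun k => `|F k|).
  by move=> x; apply: continuous_comp; [exact: cF | exact: norm_continuous].
have := @continuous_compact _ _ (fun k => `|F k|) _ (continuous_subspaceT cN) hK.
move/(compact_has_sup (ex_intro _ (`|F k0|) (ex_intro2 _ _ k0 I erefl))).
by case.
Qed.

Lemma le_supn (F : K -> X) k : continuous F -> `|F k| <= supn F.
Proof. by move=> cF; apply: ub_le_sup; [exact: supn_ub | exists k]. Qed.

Lemma supn_le (F : K -> X) M : (forall k, `|F k| <= M) -> supn F <= M.
Proof.
by move=> h; apply: ge_sup; [exists `|F k0|, k0 | move=> _ [k _ <-]].
Qed.

Lemma supn_ge0 (F : K -> X) : continuous F -> 0 <= supn F.
Proof. by move=> cF; exact: (le_trans (normr_ge0 (F k0)) (le_supn F k0 cF)). Qed.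

Lemma supn_cst (x : X) : supn (fun _ => x) = `|x|.
Proof.
apply/le_anti/andP; split; first by apply: supn_le.
by have := le_supn (fun _ : K => x) k0 (@cst_continuous K X x).
Qed.

End CK.

Arguments dist_le {R V N z A a}.
Arguments dist_sum_lt {R V N z A B c}.
Arguments dual_le1 {R V S N f z}.
Arguments dual0 {R V S N f}.
Arguments supn_cst {R K X} hK k0 x.
Arguments le_supn {R K X} hK k0 F k.
Arguments supn_le {R K X} k0 F M.
Arguments supn_ge0 {R K X} hK k0 F.
Arguments hahn_banach_norm {R V} w.
Arguments exists_small {R eps}.

Lemma C_to_X (R : realType) (K : topologicalType) (X : normedModType R) :
  compact [set: K] -> K -> CKX_has_star_star K X -> has_star_star X.
Proof.
move=> hK k0 hC z1 z2 [_ nz1] [_ nz2] eps eps0.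
have [e [e0 e4 e2]] := exists_small eps0.
pose J (x : X) := fun _ : K => x.
have cJ x : continuous (J x) := @cst_continuous K X x.
have nJ x : sup [set `|J x k| | k in [set: K]] = `|x| := supn_cst hK k0 x.
have sJ x : `|x| = 1 -> unit_sphere [set f : K -> X | continuous f]
    (fun f => sup [set `|f k| | k in [set: K]]) (J x).
  by move=> hx; split; [exact: cJ | rewrite /= nJ].
have [phi [dphi [[[_ _] phz1] dsum]]] := hC _ _ (sJ _ nz1) (sJ _ nz2) _ e0.
set Sl := slice _ _ phi e in dsum.
have Sl1 : Sl (J z1) by split => //; split; [exact: cJ | rewrite /= nJ nz1].
have [G [M [SG [G' SG' <-] hsum]]] := dist_sum_lt (ex_intro _ _ Sl1)
  (ex_intro _ (- J z1) (ex_intro2 _ _ (J z1) Sl1 erefl)) dsum.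
simpl in hsum.
case: SG => [[cG nG] phG]; case: SG' => [[cG' nG'] phG'].
have Gle t : `|G t| <= 1 := le_trans (le_supn hK k0 G t cG) nG.
have G'le t : `|G' t| <= 1 := le_trans (le_supn hK k0 G' t cG') nG'.
have S0 : continuous (0 : K -> X) := @cst_continuous K X 0.
have phD F H : continuous F -> continuous H -> phi (F + H) = phi F + phi H.
  by move=> cF cH; have := dphi.1 1 F H cF cH; rewrite scale1r mul1r.
have phZ a F : continuous F -> phi (a *: F) = a * phi F.
  move=> cF; have := dphi.1 a F 0 cF S0.
  by rewrite addr0 (dual0 dphi S0) addr0.
have cD (F H : K -> X) : continuous F -> continuous H -> continuous (F + H).
  by move=> cF cH x; apply: continuousD; [exact: cF | exact: cH].
have [t ht] : exists t, 3 * (1 - e) < `|z1 + G t + G' t|.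
  apply: contrapT => hn.
  have hle t : `|z1 + G t + G' t| <= 3 * (1 - e).
    by rewrite leNgt; apply/negP => h; apply: hn; exists t.
  pose c := (3 * (1 - e))^-1.
  have c0 : 0 < c by rewrite invr_gt0; lra.
  pose W := c *: (J z1 + G + G').
  have cW : continuous W.
    have -> : W = (fun t => (fun _ => c) t *: (J z1 + G + G') t) by [].
    move=> x; apply: (@continuousZ R X K (fun _ => c) (J z1 + G + G') x); first exact: cst_continuous.
    exact: (cD _ _ (cD _ _ (cJ z1) cG) cG').
  have WB : unit_ball [set f : K -> X | continuous f]
      (fun f => sup [set `|f k| | k in [set: K]]) W.
    split => //=; apply: supn_le => // k.
    rewrite (_ : W k = c *: (z1 + G k + G' k)) // normrZ gtr0_norm //.
    rewrite -(mulVf (_ : 3 * (1 - e) != 0)); last by apply/eqP; lra.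
    by rewrite ler_wpM2l // ltW.
  have := dual_le1 dphi WB.
  rewrite /W phZ; last exact: (cD _ _ (cD _ _ (cJ z1) cG) cG').
  rewrite !phD //; last exact: cD.
  have h3 : 1 < c * (phi (J z1) + phi G + phi G').
    rewrite -(mulVf (_ : 3 * (1 - e) != 0)); last by apply/eqP; lra.
    by rewrite ltr_pM2l //; lra.
  rewrite ger0_norm; first lra.
  by apply: mulr_ge0; [exact: ltW | lra].
pose s := G t; pose s' := G' t.
have hs : `|z2 - s| <= sup [set `|(J z2 - G) k| | k in [set: K]].
  by have := le_supn hK k0 (J z2 - G) t (cD _ _ (cJ z2) (fun x => continuousN (cG x))).
have hs' : `|z2 + s'| <= sup [set `|(J z2 - - G') k| | k in [set: K]].
  have := le_supn hK k0 (J z2 - - G') t.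
  rewrite /= opprK; apply.
  by apply: cD => // x; apply: continuousN; apply: continuousN; exact: cG'.
pose w := z1 + s + s'.
have [f [flin fle fw]] := hahn_banach_norm w.
have fD x y : f (x + y) = f x + f y by have := flin 1 x y; rewrite scale1r mul1r.
have f0 : f 0 = 0 by have := fD 0 0; rewrite addr0 => h; lra.
have fZ a x : f (a *: x) = a * f x by have := flin a x 0; rewrite !addr0 f0 addr0.
have fN x : f (- x) = - f x by rewrite -scaleN1r fZ mulN1r.
have fabs x : `|f x| <= `|x|.
  rewrite ler_norml fle andbT lerNl -fN; have := fle (- x); rewrite normrN //.
have hw : 3 * (1 - e) < `|w| by [].
have fs1 := fle s; have fs2 := fle s'; have fs3 := fle z1.
have ns := Gle t; have ns' := G'le t.
have fwE : f w = f z1 + f s + f s' by rewrite /w !fD.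
exists f; split.
- split; first by move=> a x y _ _; exact: flin.
  apply/le_anti/andP; split.
    apply: ge_ereal_sup => _ [y [_ hy] <-]; rewrite lee_fin.
    exact: le_trans (fabs y) hy.
  have wpos : 0 < `|w| by lra.
  apply: ereal_sup_ubound; exists (`|w|^-1 *: w).
    split => //; rewrite normrZ normfV normr_id mulVf //; lra.
  by rewrite fZ fw mulVf ?gtr0_norm //; lra.
- split.
    by split; [split => //; rewrite /= nz1 | lra].
  apply: (@le_lt_trans _ _ (`|z2 - s| + `|z2 + s'|)).
    apply: lerD.
      apply: dist_le => [b _|]; first exact: normr_ge0.
      split; [split => //; exact: Gle | lra].
    have -> : z2 + s' = z2 - (- s') by rewrite opprK.
    apply: dist_le => [b _|]; first exact: normr_ge0.
    exists s' => //; split; [split => //; exact: G'le | lra].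
  lra.
Qed.

Lemma vid1 (R : realType) (V : lmodType R) (a b : R) (u v w : V) :
  (a - b) *: u - (a *: v + b *: w) = a *: (u - v) - b *: (u + w).
Proof.
rewrite scalerBl scalerBr scalerDr !opprD !addrA; congr (_ + _).
by rewrite addrAC.
Qed.

Lemma vid2 (R : realType) (V : lmodType R) (c : R) (x p : V) :
  x - ((1 - c) *: x + c *: p) = c *: (x - p).
Proof.
rewrite scalerBl scale1r scalerBr opprD opprB addrA.
by rewrite addrCA subrr addr0.
Qed.

Lemma X_to_C (R : realType) (K : topologicalType) (X : normedModType R) :
  compact [set: K] -> K -> has_star_star X -> CKX_has_star_star K X.
Proof.
move=> hK k0 hX F1 F2 [cF1 nF1] [cF2 nF2] eps eps0.
simpl in nF1, nF2.
have [e [e0 e4 e2]] := exists_small eps0.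
have F2le t : `|F2 t| <= 1 by rewrite -nF2; exact: (le_supn hK k0 F2 t cF2).
have [_ [t0 _ <-] ht0] : exists2 y, [set `|F1 k| | k in [set: K]] y & 1 - e < y.
  by apply: sup_gt; [exists `|F1 k0|, k0 | rewrite nF1; lra].
pose r := `|F1 t0|.
have r1 : r <= 1 by rewrite -nF1; exact: (le_supn hK k0 F1 t0 cF1).
have rpos : 0 < r by rewrite /r; lra.
have rn0 : r != 0 by rewrite gt_eqF.
pose z1 := r^-1 *: F1 t0.
have nz1 : `|z1| = 1 by rewrite normrZ normfV normr_id mulVf.
pose y2 := F2 t0; pose lam := `|y2|.
have lam1 : lam <= 1 := F2le t0.
have lam0 : 0 <= lam := normr_ge0 _.
have [z2 [nz2 ey2]] : exists z2 : X, `|z2| = 1 /\ y2 = lam *: z2.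
  have [y0|yn0] := eqVneq y2 0.
    by exists z1; split => //; rewrite /lam y0 normr0 scale0r.
  have ln0 : lam != 0 by rewrite normr_eq0.
  exists (lam^-1 *: y2); split.
    by rewrite normrZ normfV normr_id mulVf.
  by rewrite scalerA mulfV ?scale1r.
have [f [dfX [[[_ z1b] fz1] dsum]]] := hX z1 z2 (conj I nz1) (conj I nz2) e e0.
set Sl := slice _ _ f e in dsum.
have Sl1 : Sl z1 by split.
have [s [m [Ss [s'' Ss'' <-] hsum]]] := dist_sum_lt (ex_intro _ _ Sl1)
  (ex_intro _ (- z1) (ex_intro2 _ _ z1 Sl1 erefl)) dsum.
simpl in hsum; rewrite opprK in hsum.
case: Ss => [[_ ns] fs]; case: Ss'' => [[_ ns''] fs''].
simpl in ns, ns''.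
have fD x y : f (x + y) = f x + f y.
  by have := dfX.1 1 x y I I; rewrite scale1r mul1r.
have f0 : f 0 = 0 by have := fD 0 0; rewrite addr0 => h; lra.
have fZ a x : f (a *: x) = a * f x.
  by have := dfX.1 a x 0 I I; rewrite !addr0 f0 addr0.
have fN x : f (- x) = - f x by rewrite -scaleN1r fZ mulN1r.
have fb y : `|y| <= 1 -> `|f y| <= 1.
  by move=> hy; apply: (dual_le1 dfX); split.
pose a := (1 + lam) / 2; pose b := (1 - lam) / 2.
have a0 : 1 / 2 <= a by rewrite /a; lra.
have b0 : 0 <= b by rewrite /b; lra.
have ab : a + b = 1 by rewrite /a /b; lra.
have lamab : lam = a - b by rewrite /a /b; lra.
pose p := a *: s + b *: s''.
pose q' := a *: (- s'') + b *: (- s).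
have np : `|p| <= 1.
  apply: le_trans (ler_normD _ _) _.
  rewrite !normrZ !ger0_norm //; last lra; nra.
have nq : `|q'| <= 1.
  apply: le_trans (ler_normD _ _) _.
  rewrite !normrZ !normrN !ger0_norm //; last lra; nra.
have fp : 1 - e < f p by rewrite /p fD !fZ; nra.
have fq : 1 - e < f (- q') by rewrite /q' opprD fD !fN !fZ !fN; nra.
have hpq : `|y2 - p| + `|y2 - q'| < 2 + e.
  have h1 : `|y2 - p| <= a * `|z2 - s| + b * `|z2 + s''|.
    rewrite ey2 lamab vid1; apply: le_trans (ler_normB _ _) _.
    by rewrite !normrZ !ger0_norm //; lra.
  have h2 : `|y2 - q'| <= a * `|z2 + s''| + b * `|z2 - s|.
    rewrite ey2 lamab vid1 opprK; apply: le_trans (ler_normB _ _) _.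
    by rewrite !normrZ !ger0_norm //; lra.
  have := normr_ge0 (z2 - s); have := normr_ge0 (z2 + s''); nra.
pose d := e / 2.
have d0 : 0 < d by rewrite /d; lra.
pose h t := Num.max 0 (1 - `|F2 t - y2| / d).
have h0 t : 0 <= h t by rewrite /h le_max lexx.
have h1 t : h t <= 1.
  rewrite /h ge_max ler01 /= lerBlDr lerDl; apply: divr_ge0 => //; exact: ltW.
have ht0' : h t0 = 1.
  by rewrite /h /y2 subrr normr0 mul0r subr0; apply/max_idPr; exact: ler01.
have hpos t : 0 < h t -> `|F2 t - y2| < d.
  rewrite /h lt_max ltxx /= subr_gt0 ltr_pdivrMr // mul1r //.
have ch : continuous h.
  move=> x; apply: (@continuous_max R K (fun=> 0)
    (fun t => 1 - `|F2 t - y2| / d) x); first exact: cst_continuous.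
  apply: (@continuousB R R^o K (fun=> 1) (fun t => `|F2 t - y2| / d) x).
    exact: cst_continuous.
  apply: (@continuousM R K (fun t => `|F2 t - y2|) (fun=> d^-1) x); last first.
    exact: cst_continuous.
  apply: continuous_comp; last exact: norm_continuous.
  apply: (@continuousB R X K F2 (fun=> y2) x); [exact: cF2 | exact: cst_continuous].
have c1h : continuous (fun t => 1 - h t).
  move=> x; apply: (@continuousB R R^o K (fun=> 1) h x); [exact: cst_continuous | exact: ch].
pose G t := (1 - h t) *: F2 t + h t *: p.
pose H t := (1 - h t) *: F2 t + h t *: q'.
have cGH (u : X) : continuous (fun t => (1 - h t) *: F2 t + h t *: u).
  move=> x; apply: (@continuousD R X K (fun t => (1 - h t) *: F2 t) (fun t => h t *: u) x).
    exact: (@continuousZ R X K (fun t => 1 - h t) F2 x (c1h x) (cF2 x)).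
  exact: (@continuousZ R X K h (fun=> u) x (ch x) (@cst_continuous K X u x)).
have nGH (u : X) t : `|u| <= 1 -> `|(1 - h t) *: F2 t + h t *: u| <= 1.
  move=> hu; apply: le_trans (ler_normD _ _) _.
  rewrite !normrZ !ger0_norm //; last by have := h1 t; lra.
  have := h1 t; have := h0 t; have := F2le t; nra.
have dGH (u : X) : sup [set `|(F2 - (fun t => (1 - h t) *: F2 t + h t *: u)) k|
    | k in [set: K]] <= `|y2 - u| + d.
  apply: supn_le => // t.
  change (`|F2 t - ((1 - h t) *: F2 t + h t *: u)| <= `|y2 - u| + d).
  rewrite vid2 normrZ ger0_norm //.
  have tri : `|F2 t - u| <= `|F2 t - y2| + `|y2 - u|.
    by rewrite (_ : F2 t - u = (F2 t - y2) + (y2 - u)) ?ler_normD // addrA subrK.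
  have := h1 t; have := h0 t; have := normr_ge0 (y2 - u); have := normr_ge0 (F2 t - u).
  have [hp|hn] := ltrP 0 (h t).
    have := hpos t hp; nra.
  nra.
have Gt0 (u : X) : (fun t => (1 - h t) *: F2 t + h t *: u) t0 = u.
  by rewrite /= ht0' subrr scale0r add0r scale1r.
exists (fun F => f (F t0)); split.
- split; first by move=> a' F F' _ _ /=; exact: dfX.1.
  apply/le_anti/andP; split.
    apply: ge_ereal_sup => _ [F [cF nF] <-]; rewrite lee_fin; apply: fb.
    exact: le_trans (le_supn hK k0 F t0 cF) nF.
  rewrite -dfX.2; apply: ereal_sup_le => _ [y [_ hy] <-].
  exists (fun _ => y) => //; split; first exact: cst_continuous.
  by change (supn R K X (fun _ => y) <= 1); rewrite (supn_cst hK k0 y).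
- split.
    split; first by split => //=; rewrite nF1.
    rewrite /= (_ : F1 t0 = r *: z1); last by rewrite scalerA mulfV ?scale1r.
    have hr : 1 - e < r := ht0.
    have P : 0 < (r - (1 - e)) * (f z1 - (1 - e)) by apply: mulr_gt0; lra.
    rewrite fZ; nra.
  apply: (@le_lt_trans _ _ ((`|y2 - p| + d) + (`|y2 - q'| + d))); last by rewrite /d; lra.
  apply: lerD.
    apply: le_trans (dGH p).
    apply: dist_le => [b' [[cb _] _]|].
      by apply: (supn_ge0 hK k0) => x; apply: continuousB; [exact: cF2 | exact: cb].
    split; [split; [exact: cGH | exact: (supn_le k0 _ _ (fun t => nGH p t np))] | by rewrite Gt0; lra].
  apply: le_trans (dGH q').
  apply: dist_le => [_ [b' [[cb _] _] <-]|].
    apply: (supn_ge0 hK k0) => x; apply: continuousB; first exact: cF2.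
    exact (@continuousN R X K b' x (cb x)).
  exists (- (fun t => (1 - h t) *: F2 t + h t *: q')); last exact: opprK.
  split; first split.
  + by move=> x; exact (@continuousN R X K _ x (cGH q' x)).
  + by apply: (supn_le k0) => t; rewrite /= normrN; exact: nGH.
  + change (1 - eps < f (- ((1 - h t0) *: F2 t0 + h t0 *: q'))).
    by rewrite ht0' subrr scale0r add0r scale1r; lra.
Qed.

Local Close Scope ring_scope.

Theorem theorem2p1 (R : realType) (K : topologicalType)
  (X : completeNormedModType R) :
  hausdorff_space K -> compact [set: K] -> [set: K] !=set0 ->
  has_star_star X <-> CKX_has_star_star K X.
Proof.
move=> _ hK [k0 _]; split.
- exact: (@X_to_C R K X hK k0).
- exact: (@C_to_X R K X hK k0).
Qed.
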